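(* Let $\langle \mathcal{N},\mathcal{S},\mathcal{A},P,r,\gamma\rangle$ be a Markov game as described in the context. Let $G_d=(\mathcal{N},\mathcal{E}_d)$ be a directed acyclic graph whose vertex labels follow a topological order, and let $\pi$ be a (possibly stochastic) joint policy associated with $G_d$ that is $G_d$-locally optimal. Let $G_c=(\mathcal{N},\mathcal{E}_c)$ be a coordination graph of the state-action value function $Q^{\pi}$. If $$N_d(i)=N_c(i^{[+]})\quad\text{for all } i\in\mathcal{N},$$ then $\pi$ is globally optimal, i.e. $V^{\pi}(s)=V^*(s)$ for all $s\in\mathcal{S}$.
   Context: A Markov game is a tuple $\langle \mathcal{N},\mathcal{S},\mathcal{A},P,r,\gamma\rangle$ with agents $\mathcal{N}=\{1,\dots,n\}$, finite state space $\mathcal{S}$, joint action space $\mathcal{A}=\prod_{i=1}^n\mathcal{A}_i$ with each $\mathcal{A}_i$ finite, transition kernel $P(s'|s,a)$, reward $r:\mathcal{S}\times\mathcal{A}\to\mathbb{R}$ and discount $\gamma\in[0,1)$. For a joint policy $\pi$ (mapping states to distributions over $\mathcal{A}$), $V^{\pi}(s)=\mathbb{E}[\sum_{t\ge0}\gamma^t r(s^t,a^t)\mid s^0=s]$ with $a^t\sim\pi(\cdot|s^t)$, $Q^{\pi}(s,a)$ is the same expectation conditioned additionally on $a^0=a$, and $V^*=\max_\pi V^\pi$ is the optimal value function (the unique fixed point of $TV(s)=\max_a[r(s,a)+\gamma\sum_{s'}P(s'|s,a)V(s')]$). Notation: for $S\subseteq\mathcal{N}$, $-S=\mathcal{N}\setminus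 S$, $-i=-\{i\}$, $a_S=(a_j)_{j\in S}$, $\mathcal{A}_S=\prod_{j\in S}\mathcal{A}_j$; $i^-=\{1,\dots,i-1\}$, $i^+=\{i+1,\dots,n\}$, $i^{[+]}=\{i,\dots,n\}$. Coordination graph (CG): an undirected graph $G_c=(\mathcal{N},\mathcal{E}_c)$ is a CG of a function $Q:\mathcal{S}\times\mathcal{A}\to\mathbb{R}$ if there exist functions $Q_{ij}:\mathcal{S}\times\mathcal{A}_i\times\mathcal{A}_j\to\mathbb{R}$ for each edge $(i,j)\in\mathcal{E}_c$ and $Q_i:\mathcal{S}\times\mathcal{A}_i\to\mathbb{R}$ for each $i\in\mathcal{N}$ such that $Q(s,a)=\sum_{i}Q_i(s,a_i)+\sum_{(i,j)\in\mathcal{E}_c}Q_{ij}(s,a_i,a_j)$. (The paper assumes w.l.o.g. $G_c$ connected, so that $Q(s,a)=\sum_{(i,j)\in\mathcal{E}_c}Q_{ij}(s,a_i,a_j)$.) $N_c(i)$ denotes the neighbors of $i$ in $G_c$, and for $S\subseteq\mathcal{N}$, $N_c(S)=(\bigcup_{i\in S}N_c(i))\setminus S$. Action dependency graph (ADG): a directed acyclic graph $G_d=(\mathcal{N},\mathcal{E}_d)$; $N_d(i)=\{j:(j,i)\in\mathcal{E}_d\}$ and $N_d[i]=N_d(i)\cup\{i\}$. Agents are indexed in a topological order, i.e. $j<i$ for all $j\in N_d(i)$. A joint policy $\pi$ is associated with $G_d$ if $\pi(a|s)=\prod_{i=1}^n\pi_i(a_i|s,a_{N_d(i)})$ with individual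 policies $\pi_i:\mathcal{S}\times\mathcal{A}_{N_d(i)}\to\Delta(\mathcal{A}_i)$. Expectation convention: for fixed $s$ and a fixed partial action $a_{N_d(i)}$, $\mathbb{E}_{\pi'_i,\pi_{-N_d[i]}}[\cdot]$ denotes the expectation when the remaining actions $a_j$, $j\notin N_d(i)$, are drawn in increasing order of index, $a_j\sim\pi_j(\cdot|s,a_{N_d(j)})$ for $j\neq i$ and $a_i\sim\pi'_i(\cdot|s,a_{N_d(i)})$ (using the fixed components and previously drawn ones); $\mathbb{E}_{\pi_{-N_d(i)}}$ is the same with $\pi'_i=\pi_i$. $G_d$-locally optimal: $\pi$ associated with $G_d$ is $G_d$-locally optimal if for all $i\in\mathcal{N}$, $s\in\mathcal{S}$, $a_{N_d(i)}\in\mathcal{A}_{N_d(i)}$: $\mathbb{E}_{\pi_{-N_d(i)}}[Q^{\pi}(s,a)]=\max_{\pi'_i(\cdot|s,a_{N_d(i)})}\mathbb{E}_{\pi'_i,\pi_{-N_d[i]}}[Q^{\pi}(s,a)]$, the maximum being over distributions on $\mathcal{A}_i$. *)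

(* Defs.v *)
From HB Require Import structures.
From mathcomp Require Import all_boot all_order all_algebra.
From mathcomp Require Import all_classical all_reals all_analysis.
Set Implicit Arguments. Unset Strict Implicit. Unset Printing Implicit Defensive.
Import Order.TTheory GRing.Theory Num.Theory.
Import numFieldNormedType.Exports.
Local Open Scope ring_scope.
Local Open Scope classical_set_scope.

Section MarkovGame.
Variables (R : realType) (n : nat) (S : finType) (Ai : 'I_n -> finType).

Definition jact := {dffun forall i : 'I_n, Ai i}.

Definition is_dist (T : finType) (p : T -> R) :=
  (forall x, 0 <= p x) /\ \sum_(x : T) p x = 1.

Variables (P : S -> jact -> S -> R) (r : S -> jact -> R) (gamma : R).

Definition is_markov_game :=
  (forall s a, is_dist (P s a)) /\ (0 <= gamma /\ gamma < 1).

(* joint (stationary) policy: pi s a = pi(a|s) *)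
Definition joint_policy := S -> jact -> R.
Definition is_joint_policy (pi : joint_policy) := forall s, is_dist (pi s).

(* ER pi t s = E[ r(s^t,a^t) | s^0 = s ],  a^t ~ pi(.|s^t), s^{t+1} ~ P(.|s^t,a^t) *)
Fixpoint ER (pi : joint_policy) (t : nat) (s : S) : R :=
  match t with
  | 0 => \sum_(a : jact) pi s a * r s a
  | t'.+1 => \sum_(a : jact) pi s a * \sum_(s' : S) P s a s' * ER pi t' s'
  end.

(* ERa pi t s a = E[ r(s^t,a^t) | s^0 = s, a^0 = a ] *)
Definition ERa (pi : joint_policy) (t : nat) (s : S) (a : jact) : R :=
  match t with
  | 0 => r s a
  | t'.+1 => \sum_(s' : S) P s a s' * ER pi t' s'
  end.

Definition V (pi : joint_policy) (s : S) : R :=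
  limn (series (fun t => gamma ^+ t * ER pi t s)).

Definition Q (pi : joint_policy) (s : S) (a : jact) : R :=
  limn (series (fun t => gamma ^+ t * ERa pi t s a)).

Definition Vstar (s : S) : R :=
  sup [set V pi s | pi in [set pi | is_joint_policy pi]].

(* ADG: edge relation Ed j i means (j,i) in E_d; topological labelling *)
Definition topo_dag (Ed : rel 'I_n) := forall i j : 'I_n, Ed j i -> (j < i)%N.
Definition Nd (Ed : rel 'I_n) (i : 'I_n) : {set 'I_n} := [set j | Ed j i].

Definition undirected (Ec : rel 'I_n) := symmetric Ec /\ irreflexive Ec.
Definition Nc (Ec : rel 'I_n) (X : {set 'I_n}) : {set 'I_n} :=
  (\bigcup_(k in X) [set j | Ec k j]) :\: X.
Definition iplus (i : 'I_n) : {set 'I_n} := [set j : 'I_n | (i <= j)%N].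

(* G_c = (N, Ec) is a coordination graph of Qf; each undirected edge {i,j}
   is counted once, as the ordered pair with i < j *)
Definition is_CG (Ec : rel 'I_n) (Qf : S -> jact -> R) :=
  exists (Q1 : forall i : 'I_n, S -> Ai i -> R)
         (Q2 : forall i j : 'I_n, S -> Ai i -> Ai j -> R),
  forall s a, Qf s a = \sum_(i : 'I_n) Q1 i s (a i)
     + \sum_(i : 'I_n) \sum_(j : 'I_n | (i < j)%N && Ec i j) Q2 i j s (a i) (a j).

(* individual policies pi_i(a_i | s, a_{N_d(i)}): encoded as functions of the
   whole joint action that only depend on the components in N_d(i) *)
Definition ind_policy := forall i : 'I_n, S -> jact -> Ai i -> R.

Definition ind_policies_on (Ed : rel 'I_n) (pol : ind_policy) :=
  (forall i s a, is_dist (pol i s a)) /\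
  (forall i s (a a' : jact), (forall j, j \in Nd Ed i -> a j = a' j) ->
      pol i s a = pol i s a').

Definition joint_of (pol : ind_policy) : joint_policy :=
  fun s a => \prod_(i : 'I_n) pol i s a (a i).

(* E_{pi'_i, pi_{-N_d[i]}}[Q^pi(s,a)] for fixed s and fixed a_{N_d(i)} = b_{N_d(i)},
   where q = pi'_i(.|s,a_{N_d(i)}) *)
Definition Eloc (Ed : rel 'I_n) (pol : ind_policy) (i : 'I_n) (s : S)
    (b : jact) (q : Ai i -> R) : R :=
  \sum_(a : jact | [forall j in Nd Ed i, a j == b j])
     (\prod_(j : 'I_n | j \notin Nd Ed i)
          (if j == i then q (a i) else pol j s a (a j)))
     * Q (joint_of pol) s a.

Definition locally_optimal (Ed : rel 'I_n) (pol : ind_policy) :=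
  forall (i : 'I_n) (s : S) (b : jact),
    Eloc Ed pol s b (pol i s b) =
    sup [set Eloc Ed pol s b q | q in [set q : Ai i -> R | is_dist q]].

End MarkovGame.

(* Main.v *)
Require Import Defs.
From HB Require Import structures.
From mathcomp Require Import all_boot all_order all_algebra.
From mathcomp Require Import all_classical all_reals all_analysis.
From mathcomp Require Import lra.
Import Order.TTheory GRing.Theory Num.Theory.
Import numFieldNormedType.Exports.
Unset Printing Implicit Defensive.
Local Open Scope ring_scope.

Section Comb.
Variables (R : realType) (n : nat) (Ai : 'I_n -> finType).
Local Notation JA := (@jact n Ai).

Definition upd (c : JA) (j : 'I_n) (x : Ai j) : JA :=
  finfun (dfwith (fun i => c i) j x).

Lemma upd_same c j x : upd c j x j = x.
Proof. by rewrite /upd ffunE dfwithin. Qed.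

Lemma upd_other c j x i : j != i -> upd c j x i = c i.
Proof. by move=> h; rewrite /upd ffunE dfwithout. Qed.

Lemma upd_id c j : upd c j (c j) = c.
Proof.
apply/ffunP => i; case: (eqVneq j i) => [<-|h]; first by rewrite upd_same.
by rewrite upd_other.
Qed.

Definition Ker := forall j : 'I_n, JA -> Ai j -> R.

Fixpoint Wseq (K : Ker) (s : seq 'I_n) (f : JA -> R) (c : JA) : R :=
  match s with
  | [::] => f c
  | j :: s' => \sum_(x : Ai j) K j c x * Wseq K s' f (upd c j x)
  end.

Definition Lk (k : nat) : seq 'I_n := pmap insub (iota k (n - k)).

Lemma Lk_cons k (h : (k < n)%N) : Lk k = Ordinal h :: Lk k.+1.
Proof.
rewrite /Lk; have -> : (n - k = (n - k.+1).+1)%N by rewrite subnSK.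
by rewrite /= insubT.
Qed.

Lemma Lk_ge k : (n <= k)%N -> Lk k = [::].
Proof. by move=> h; rewrite /Lk (eqP h). Qed.

Definition depc (T : Type) (U : pred 'I_n) (g : JA -> T) :=
  forall c c' : JA, (forall i, U i -> c i = c' i) -> g c = g c'.

Arguments depc {T}.
Definition kdep (K : Ker) := forall j : 'I_n, depc (fun i => (i < j)%N) (K j).

Definition pref k (a c : JA) := [forall i : 'I_n, (i < k)%N ==> (a i == c i)].

Lemma conv K f : kdep K -> forall k, (k <= n)%N -> forall c,
  \sum_(a : JA | pref k a c) (\prod_(j : 'I_n | (k <= j)%N) K j a (a j)) * f a
  = Wseq K (Lk k) f c.
Proof.
move=> Kd k; move Hd: (n - k)%N => d; elim: d k Hd => [|d IH] k Hd hk c.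
  have ek : k = n by apply/eqP; rewrite eqn_leq hk /= -subn_eq0 Hd.
  subst k; rewrite Lk_ge //= (big_pred1 c) ?big_pred0 ?mul1r //.
    by move=> j /=; rewrite leqNgt ltn_ord.
  move=> a /=; apply/idP/eqP => [/forallP H|->].
    by apply/ffunP => i; move: (H i); rewrite ltn_ord /= => /eqP.
  by apply/forallP => i; rewrite eqxx implybT.
have hkn : (k < n)%N by rewrite -subn_gt0 Hd.
rewrite Lk_cons /=.
set ok := Ordinal hkn.
rewrite (partition_big (fun a : JA => a ok) xpredT) //=.
apply: eq_bigr => x _.
have e1 : (n - k.+1)%N = d by rewrite subnS Hd.
rewrite -(IH k.+1 e1 hkn).
rewrite mulr_sumr; apply: eq_big => a.
  apply/andP/forallP => [[/forallP H /eqP hx] i|H]; [apply/implyP => hi|split].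
  - case: (eqVneq ok i) => [<-|hne]; first by rewrite upd_same hx.
    rewrite upd_other //; apply: (implyP (H i)).
    rewrite ltn_neqAle -ltnS hi andbT; apply: contra hne => /eqP hh.
    by apply/eqP/val_inj; rewrite /= hh.
  - apply/forallP => i; apply/implyP => hi; move: (implyP (H i)).
    rewrite (@upd_other c ok x i); first by apply; apply: ltnW.
    by apply/eqP => hh; move: hi; rewrite -hh ltnn.
  - by move: (implyP (H ok)); rewrite upd_same; apply.
move=> /andP [/forallP H /eqP hx].
rewrite (bigD1 ok) /=; last by [].
rewrite -mulrA; congr (_ * _).
  rewrite hx (Kd ok a c) // => i hi.
  by apply/eqP; apply: (implyP (H i)).
congr (_ * _); apply: eq_bigl => j.
case: (eqVneq j ok) => [->|h] /=; first by rewrite ltnn andbF.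
rewrite andbT ltn_neqAle; case: (eqVneq k j) => // hh.
by case/eqP: h; apply/val_inj; rewrite /= hh.
Qed.

Lemma sum_delta (T : finType) (y : T) (F : T -> R) :
  \sum_(x : T) (x == y)%:R * F x = F y.
Proof.
rewrite (bigD1 y) //= eqxx mul1r big1 ?addr0 // => x /negbTE ->.
by rewrite mul0r.
Qed.

Lemma Wseq_add K s f g c :
  Wseq K s (fun a => f a + g a) c = Wseq K s f c + Wseq K s g c.
Proof.
elim: s c => [|j s IH] c //=.
by rewrite -big_split /=; apply: eq_bigr => x _; rewrite IH mulrDr.
Qed.

Lemma Wseq_extf K s f g c : (forall a, f a = g a) -> Wseq K s f c = Wseq K s g c.
Proof.
move=> h; elim: s c => [|j s IH] c //=.
by apply: eq_bigr => x _; rewrite IH.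
Qed.

Lemma Wseq_extK K K' s f c : (forall j, j \in s -> forall c x, K j c x = K' j c x) ->
  Wseq K s f c = Wseq K' s f c.
Proof.
elim: s c => [|j s IH] c h //=.
apply: eq_bigr => x _; rewrite h ?mem_head // IH // => i hi.
by apply: h; rewrite in_cons hi orbT.
Qed.

Lemma Wseq_inv K s f c : (forall j, j \in s -> forall c, is_dist (K j c)) ->
  (forall j, j \in s -> forall c x, f (upd c j x) = f c) -> Wseq K s f c = f c.
Proof.
elim: s c => [|j s IH] c hK hf //=.
transitivity (\sum_(x : Ai j) K j c x * f c).
  apply: eq_bigr => x _; rewrite IH ?hf ?mem_head //.
    by move=> i hi; apply: hK; rewrite in_cons hi orbT.
  by move=> i hi; apply: hf; rewrite in_cons hi orbT.
by rewrite -mulr_suml (hK j (mem_head _ _) c).2 mul1r.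
Qed.

Lemma Wseq_dep K f (U : pred 'I_n) k : (k <= n)%N ->
  (forall i, U i -> (i < k)%N) ->
  depc (fun i => U i || (k <= i)%N) f ->
  (forall j : 'I_n, (k <= j)%N -> depc (fun i => U i || ((k <= i) && (i < j))%N) (K j)) ->
  depc U (Wseq K (Lk k) f).
Proof.
move=> hkn hU hf hK.
suff H : forall j, (k <= j)%N -> (j <= n)%N ->
    depc (fun i => U i || ((k <= i) && (i < j))%N) (Wseq K (Lk j) f).
  move=> c c' h; apply: (H k) => // i /orP [/h //|] /andP [h1 h2].
  by move: (leq_trans h2 h1); rewrite ltnn.
move=> j hkj hjn; move Hd: (n - j)%N => d; elim: d j Hd hkj hjn => [|d IH] j Hd hkj hjn.
  have ej : j = n by apply/eqP; rewrite eqn_leq hjn /= -subn_eq0 Hd.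
  subst j; rewrite Lk_ge //= => c c' h; apply: hf => i /orP [hi|hi]; apply: h.
    by rewrite hi.
  by rewrite hi ltn_ord orbT.
have hjn' : (j < n)%N by rewrite -subn_gt0 Hd.
rewrite Lk_cons /= => c c' h.
have e1 : (n - j.+1)%N = d by rewrite subnS Hd.
rewrite (hK (Ordinal hjn') hkj c c') //; apply: eq_bigr => x _; congr (_ * _).
apply: (IH j.+1 e1 (leqW hkj) hjn') => i hi.
case: (eqVneq (Ordinal hjn') i) => [<-|hne]; first by rewrite !upd_same.
rewrite !upd_other //; apply: h; case/orP: hi => [->//|/andP [h1 h2]].
apply/orP; right; rewrite h1 /= ltn_neqAle -ltnS h2 andbT.
apply/eqP => hh; case/eqP: hne.
by apply/val_inj; rewrite /= hh.
Qed.

Lemma Wseq_collapse K f (U : pred 'I_n) k (a : JA) : (k <= n)%N ->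
  (forall i, U i -> (i < k)%N) ->
  (forall j : 'I_n, (j < k)%N -> U j -> forall c x, K j c x = (x == a j)%:R) ->
  (forall j : 'I_n, (j < k)%N -> ~~ U j -> forall c, is_dist (K j c)) ->
  depc U (Wseq K (Lk k) f) ->
  forall c, Wseq K (Lk 0) f c = Wseq K (Lk k) f a.
Proof.
move=> hkn hU hd hK hW.
suff H : forall j, (j <= k)%N -> forall c : JA, (forall i, U i -> (i < j)%N -> c i = a i) ->
    Wseq K (Lk j) f c = Wseq K (Lk k) f a.
  by move=> c; apply: H.
move=> j hjk; move Hd: (k - j)%N => d; elim: d j Hd hjk => [|d IH] j Hd hjk c hc.
  have ej : j = k by apply/eqP; rewrite eqn_leq hjk /= -subn_eq0 Hd.
  subst j; apply: hW => i hi; apply: hc => //; exact: hU.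
have hjk' : (j < k)%N by rewrite -subn_gt0 Hd.
have hjn : (j < n)%N by apply: leq_trans hkn.
have e1 : (k - j.+1)%N = d by rewrite subnS Hd.
rewrite Lk_cons /=; set oj := Ordinal hjn.
have hc' : forall x, (forall i, U i -> (i < j.+1)%N -> upd c oj x i = a i) ->
    Wseq K (Lk j.+1) f (upd c oj x) = Wseq K (Lk k) f a.
  by move=> x hx; apply: (IH j.+1 e1 hjk').
case hUj: (U oj).
  under eq_bigr => x _ do rewrite (hd oj hjk' hUj c x).
  rewrite sum_delta; apply: hc' => i hi hij.
  case: (eqVneq oj i) => [<-|hne]; first by rewrite upd_same.
  rewrite upd_other //; apply: hc => //; rewrite ltn_neqAle -ltnS hij andbT.
  by apply/eqP => hh; case/eqP: hne; apply/val_inj; rewrite /= hh.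
transitivity (\sum_(x : Ai oj) K oj c x * Wseq K (Lk k) f a).
  apply: eq_bigr => x _; rewrite hc' // => i hi hij.
  case: (eqVneq oj i) => [hh|hne]; first by move: hi; rewrite -hh hUj.
  rewrite upd_other //; apply: hc => //; rewrite ltn_neqAle -ltnS hij andbT.
  by apply/eqP => hh; case/eqP: hne; apply/val_inj; rewrite /= hh.
by rewrite -mulr_suml (hK oj hjk' (negbT hUj) c).2 mul1r.
Qed.


Lemma term_le_sum (T : finType) (F : T -> R) (y : T) :
  (forall x, 0 <= F x) -> F y <= \sum_x F x.
Proof. by move=> h; rewrite (bigD1 y) //= lerDl sumr_ge0. Qed.

Lemma conv0 K f c : kdep K ->
  \sum_(a : JA) (\prod_(j : 'I_n) K j a (a j)) * f a = Wseq K (Lk 0) f c.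
Proof.
move=> Kd; rewrite -(@conv K f Kd 0 (leq0n n) c); apply: eq_big => a.
  by apply/esym/forallP => i; rewrite ltn0.
by move=> _; congr (_ * _); apply: eq_bigl.
Qed.

Lemma mem_Lk k (j : 'I_n) : (j \in Lk k) = (k <= j)%N.
Proof.
rewrite /Lk mem_pmap_sub mem_iota; case: (leqP k j) => //= hkj.
by rewrite subnKC ?ltn_ord // ltnW // (leq_ltn_trans hkj).
Qed.

Lemma Wseq_upto K K' f j k : (j <= k)%N -> (k <= n)%N ->
  (forall i : 'I_n, (j <= i)%N -> (i < k)%N -> forall c x, K i c x = K' i c x) ->
  (forall c, Wseq K (Lk k) f c = Wseq K' (Lk k) f c) ->
  forall c, Wseq K (Lk j) f c = Wseq K' (Lk j) f c.
Proof.
move=> hjk hkn hK hW; move Hd: (k - j)%N => d; elim: d j Hd hjk hK => [|d IH] j Hd hjk hK c.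
  have ej : j = k by apply/eqP; rewrite eqn_leq hjk /= -subn_eq0 Hd.
  by subst j; apply: hW.
have hjk' : (j < k)%N by rewrite -subn_gt0 Hd.
have hjn : (j < n)%N by apply: leq_trans hkn.
have e1 : (k - j.+1)%N = d by rewrite subnS Hd.
rewrite Lk_cons /=; apply: eq_bigr => x _.
rewrite hK //= (IH j.+1 e1 hjk') // => i hi hik; apply: hK => //; exact: ltnW.
Qed.

Section Key.
Variables (S : finType) (P : S -> JA -> S -> R) (r : S -> JA -> R) (gamma : R).
Variables (Ed Ec : rel 'I_n) (pol : ind_policy R S Ai).
Hypotheses (htopo : topo_dag Ed) (hpol : ind_policies_on Ed pol)
  (hloc : locally_optimal P r gamma Ed pol) (hund : undirected Ec)
  (hNd : forall i, Nd Ed i = Nc Ec (iplus i)).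

Lemma Nd_lt {i j : 'I_n} : j \in Nd Ed i -> (j < i)%N.
Proof. by rewrite /Nd inE; apply: htopo. Qed.

Lemma NcP (X : {set 'I_n}) i :
  reflect (i \notin X /\ exists2 m, m \in X & Ec m i) (i \in Nc Ec X).
Proof.
rewrite /Nc !inE; apply: (iffP andP) => [[h1 /bigcupP [m hm]]|[h1 [m hm he]]].
  by rewrite inE => he; split => //; exists m.
by split => //; apply/bigcupP; exists m => //; rewrite inE.
Qed.

Lemma Nd_sub (k j i : 'I_n) : (k <= j)%N -> i \in Nd Ed j ->
  (i \in Nd Ed k) || ((k <= i) && (i < j))%N.
Proof.
move=> hkj hi; have hij := Nd_lt hi.
move: hi; rewrite hNd => /NcP [hi [m hm he]].
case: (leqP k i) => hki; first by rewrite hij orbT.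
rewrite orbF hNd; apply/NcP; split; first by rewrite inE -ltnNge.
by exists m => //; move: hm; rewrite !inE => hm; apply: leq_trans hm.
Qed.

Lemma B_nb (k i j : 'I_n) : Ec i j -> (i < k)%N -> (k <= j)%N -> i \in Nd Ed k.
Proof.
move=> he hik hkj; rewrite hNd; apply/NcP; split; first by rewrite inE -ltnNge.
by exists j; rewrite ?inE //; rewrite (proj1 hund).
Qed.

Definition Kpi (s : S) : Ker := fun j c x => pol j s c x.

Lemma Kpi_dep s : kdep (Kpi s).
Proof.
move=> j c c' h; apply: (proj2 hpol) => i hi; apply: h; exact: Nd_lt.
Qed.

Lemma Kpi_dist s j c : is_dist (Kpi s j c).
Proof. exact: (proj1 hpol). Qed.

Definition Kq (s : S) (k : 'I_n) (q : Ai k -> R) (b : JA) : Ker :=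
  fun j c x => if j \in Nd Ed k then (x == b j)%:R
               else if j == k then q (upd c j x k) else pol j s c x.

Lemma Kq_dep s k q b : kdep (Kq s k q b).
Proof.
move=> j c c' h; apply: funext => x; rewrite /Kq; case: ifP => // _.
case: (eqVneq j k) => [ejk|_]; first by subst j; rewrite !upd_same.
by rewrite ((proj2 hpol) j s c c') // => i hi; apply: h; exact: Nd_lt.
Qed.

Lemma Kq_dist s k q b j c : j \notin Nd Ed k -> is_dist q -> is_dist (Kq s k q b j c).
Proof.
move=> hj [hq1 hq2]; rewrite /Kq /is_dist; rewrite (negbTE hj).
case: (eqVneq j k) => [ejk|_]; last exact: (proj1 hpol).
subst j; split; first by move=> x; rewrite upd_same.
by under eq_bigr => x _ do rewrite upd_same.
Qed.

Lemma Eloc_W s k q b c :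
  Eloc P r gamma Ed pol s b q = Wseq (Kq s k q b) (Lk 0) (Q P r gamma (joint_of pol) s) c.
Proof.
rewrite -(@conv0 _ _ c (Kq_dep s k q b)) /Eloc big_mkcond /=; apply: eq_bigr => a _.
rewrite [in RHS](bigID (fun j => j \in Nd Ed k)) /=.
case: ifP => [/forall_inP H|/negbT/forall_inPn [j hj hne]].
  rewrite [X in _ = X * _ * _]big1 ?mul1r; last first.
    by move=> j hj; rewrite /Kq hj (eqP (H j hj)) eqxx.
  congr (_ * _); apply: eq_bigr => j hj; rewrite /Kq (negbTE hj) upd_id //.
by rewrite (bigD1 j) //= {1}/Kq hj (negbTE hne) !mul0r.
Qed.

Lemma joint_dist (c : JA) : is_joint_policy (joint_of pol).
Proof.
move=> s'; split => [a|].
  by apply: prodr_ge0 => j _; apply: (proj1 (proj1 hpol j s' a)).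
rewrite -[RHS](@Wseq_inv (Kpi s') (Lk 0) (fun _ => 1) c) //.
- rewrite -(@conv0 (Kpi s') (fun _ => 1) c (Kpi_dep s')).
  by apply: eq_bigr => a _; rewrite mulr1.
- by move=> j _ c'; apply: Kpi_dist.
Qed.

Section KeyS.
Variables (s : S) (Q1 : forall i : 'I_n, S -> Ai i -> R)
  (Q2 : forall i j : 'I_n, S -> Ai i -> Ai j -> R).
Hypothesis hCG : forall a, Q P r gamma (joint_of pol) s a =
  \sum_(i : 'I_n) Q1 i s (a i)
  + \sum_(i : 'I_n) \sum_(j : 'I_n | (i < j)%N && Ec i j) Q2 i j s (a i) (a j).
Local Notation Qs := (Q P r gamma (joint_of pol) s).

Section KeyK.
Variable k : 'I_n.

Definition Apart (a : JA) := \sum_(i : 'I_n | (i < k)%N) Q1 i s (a i)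
  + \sum_(i : 'I_n) \sum_(j : 'I_n | ((i < j)%N && Ec i j) && (j < k)%N) Q2 i j s (a i) (a j).
Definition Bpart (a : JA) := \sum_(i : 'I_n | ~~ (i < k)%N) Q1 i s (a i)
  + \sum_(i : 'I_n) \sum_(j : 'I_n | ((i < j)%N && Ec i j) && ~~ (j < k)%N) Q2 i j s (a i) (a j).

Lemma QAB a : Qs a = Apart a + Bpart a.
Proof.
rewrite hCG /Apart /Bpart (bigID (fun i : 'I_n => (i < k)%N) (fun _ => true)) /=.
have -> : \sum_(i : 'I_n) \sum_(j : 'I_n | (i < j)%N && Ec i j) Q2 i j s (a i) (a j) =
  \sum_(i : 'I_n) \sum_(j : 'I_n | ((i < j)%N && Ec i j) && (j < k)%N) Q2 i j s (a i) (a j)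
  + \sum_(i : 'I_n) \sum_(j : 'I_n | ((i < j)%N && Ec i j) && ~~ (j < k)%N) Q2 i j s (a i) (a j).
  by rewrite -big_split /=; apply: eq_bigr => i _; rewrite (bigID (fun j : 'I_n => (j < k)%N)).
by rewrite addrACA.
Qed.

Lemma A_inv (j : 'I_n) c x : (k <= j)%N -> Apart (upd c j x) = Apart c.
Proof.
move=> hkj; have ne : forall i : 'I_n, (i < k)%N -> j != i.
  by move=> i hi; apply/eqP => e; move: hi; rewrite -e ltnNge hkj.
rewrite /Apart; congr (_ + _).
  by apply: eq_bigr => i hi; rewrite upd_other ?ne.
apply: eq_bigr => i _; apply: eq_bigr => j' /andP [/andP [hij _] hj'].
by rewrite !upd_other ?ne // (ltn_trans hij hj').
Qed.

Lemma B_dep : depc (fun i => (i \in Nd Ed k) || (k <= i)%N) Bpart.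
Proof.
move=> c c' h; rewrite /Bpart; congr (_ + _).
  apply: eq_bigr => i hi; congr (Q1 i s _); apply: h; rewrite -leqNgt in hi; by rewrite hi orbT.
apply: eq_bigr => i _; apply: eq_bigr => j /andP [/andP [hij he] hj].
rewrite -leqNgt in hj.
rewrite (h j); last by rewrite hj orbT.
rewrite (h i) //; case: (leqP k i) => hki; first by rewrite orbT.
by rewrite (B_nb _ _ _ he hki hj).
Qed.

Definition hB (c : JA) (x : Ai k) := Wseq (Kpi s) (Lk k.+1) Bpart (upd c k x).

Lemma hW_eq c x : Wseq (Kpi s) (Lk k.+1) Qs (upd c k x) = Apart c + hB c x.
Proof.
rewrite (Wseq_extf _ _ _ _ _ QAB) Wseq_add Wseq_inv.
- by rewrite A_inv.
- by move=> j _ c'; apply: Kpi_dist.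
- by move=> j; rewrite mem_Lk => hj c' x'; apply: A_inv; apply: ltnW.
Qed.

Definition CA q c := Wseq (Kq s k q c) (Lk 0) Apart c.

Lemma k_notin : k \notin Nd Ed k.
Proof. by apply/negP => /Nd_lt; rewrite ltnn. Qed.

Lemma ok_eq : Ordinal (ltn_ord k) = k.
Proof. by apply: val_inj. Qed.

Lemma Eloc_eq q c : is_dist q ->
  Eloc P r gamma Ed pol s c q = CA q c + \sum_x q x * hB c x.
Proof.
move=> hq; rewrite (@Eloc_W s k q c c) (Wseq_extf _ _ _ _ _ QAB) Wseq_add; congr (_ + _).
have hkn : (k <= n)%N by apply: ltnW.
rewrite (@Wseq_collapse (Kq s k q c) Bpart (fun i => i \in Nd Ed k) k c hkn) //.
- rewrite (@Lk_cons k (ltn_ord k)) ok_eq /=; apply: eq_bigr => x _.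
  congr (_ * _); first by rewrite /Kq (negbTE k_notin) eqxx upd_same.
  rewrite /hB; apply: Wseq_extK => j; rewrite mem_Lk => hj c' x'.
  rewrite /Kq /Kpi; case: ifP => [/Nd_lt hh|_].
    by move: (ltn_trans hj hh); rewrite ltnn.
  have : j != k by apply/eqP => e; move: hj; rewrite e ltnn.
  by move/negbTE => ->.
- by move=> i /Nd_lt.
- by move=> j _ hj c' x; rewrite /Kq hj.
- by move=> j _ hj c'; apply: Kq_dist.
apply: (@Wseq_dep _ _ _ _ hkn) => //; first by move=> i /Nd_lt.
  exact: B_dep.
move=> j hkj c1 c2 h; apply: funext => x; rewrite /Kq; case: ifP => // _.
case: (eqVneq j k) => [ejk|_]; first by subst j; rewrite !upd_same.
rewrite ((proj2 hpol) j s c1 c2) // => i hi; apply: h; exact: Nd_sub.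
Qed.

Lemma CA_eq q q' c : is_dist q -> is_dist q' -> CA q c = CA q' c.
Proof.
move=> hq hq'; rewrite /CA; apply: (@Wseq_upto _ _ _ 0 k) => //; first exact: ltnW.
  move=> i _ hik c' x; rewrite /Kq; case: ifP => // _.
  have : i != k by apply/eqP => e; move: hik; rewrite e ltnn.
  by move/negbTE => ->.
move=> c'; rewrite !Wseq_inv //.
- move=> j; rewrite mem_Lk => hj c2; apply: Kq_dist => //; apply/negP => /Nd_lt.
  by rewrite ltnNge hj.
- by move=> j; rewrite mem_Lk => hj c2 x; apply: A_inv.
- move=> j; rewrite mem_Lk => hj c2; apply: Kq_dist => //; apply/negP => /Nd_lt.
  by rewrite ltnNge hj.
- by move=> j; rewrite mem_Lk => hj c2 x; apply: A_inv.
Qed.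

Lemma key c y :
  Wseq (Kpi s) (Lk k.+1) Qs (upd c k y) <=
  \sum_x pol k s c x * Wseq (Kpi s) (Lk k.+1) Qs (upd c k x).
Proof.
under eq_bigr => x _ do rewrite hW_eq.
rewrite hW_eq.
under eq_bigr => x _ do rewrite mulrDr.
rewrite big_split /= -mulr_suml (proj2 (proj1 hpol k s c)) mul1r lerD2l.
set d := fun x : Ai k => ((x == y)%:R : R).
have hd : is_dist d.
  split => [x|]; first by rewrite /d ler0n.
  by rewrite /d (bigD1 y) //= eqxx big1 ?addr0 // => x /negbTE ->.
have hpd : is_dist (pol k s c) by apply: (proj1 hpol).
have := hloc k s c.
rewrite (Eloc_eq _ c hpd) => hsup.
have : Eloc P r gamma Ed pol s c d <= CA (pol k s c) c + \sum_x pol k s c x * hB c x.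
  rewrite hsup; apply: ub_le_sup; last by exists d.
  exists (CA (pol k s c) c + \sum_x `|hB c x|) => z [q hq <-].
  rewrite (Eloc_eq _ c hq) (CA_eq _ _ c hq hpd) lerD2l.
  apply: (@le_trans _ _ (\sum_x q x * \sum_x' `|hB c x'|)).
    apply: ler_sum => x _; apply: ler_wpM2l; first exact: (proj1 hq).
    apply: le_trans (ler_norm _) _; apply: (@term_le_sum _ (fun x => `|hB c x|)).
    by move=> x'; apply: normr_ge0.
  by rewrite -mulr_suml (proj2 hq) mul1r.
rewrite (Eloc_eq _ c hd) (CA_eq _ _ c hd hpd) lerD2l.
have -> : \sum_x d x * hB c x = hB c y by rewrite /d sum_delta.
done.
Qed.

End KeyK.

Lemma chain m : (m <= n)%N -> forall c, Qs c <= Wseq (Kpi s) (Lk m) Qs c.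
Proof.
move=> hm; move Hd: (n - m)%N => d; elim: d m Hd hm => [|d IH] m Hd hm c.
  have em : m = n by apply/eqP; rewrite eqn_leq hm /= -subn_eq0 Hd.
  by subst m; rewrite Lk_ge.
have hmn : (m < n)%N by rewrite -subn_gt0 Hd.
have e1 : (n - m.+1)%N = d by rewrite subnS Hd.
rewrite Lk_cons /=; set om := Ordinal hmn.
apply: le_trans (key om c (c om)); rewrite upd_id.
exact: (IH m.+1 e1 hmn).
Qed.

Lemma E_ge c : Qs c <= \sum_(a : JA) joint_of pol s a * Qs a.
Proof.
rewrite (@conv0 (Kpi s) Qs c (Kpi_dep s)); exact: chain.
Qed.

End KeyS.

End Key.

End Comb.
Local Open Scope classical_set_scope.

Section Val.
Variables (R : realType) (n : nat) (S : finType) (Ai : 'I_n -> finType).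
Local Notation JA := (@jact n Ai).
Variables (P : S -> JA -> S -> R) (r : S -> JA -> R) (gamma : R).
Hypothesis hmg : is_markov_game P gamma.

Lemma cvg_sum_fin (T : finType) (u : T -> nat -> R) (l : T -> R) :
  (forall x, u x @ \oo --> l x) ->
  (fun N => \sum_(x : T) u x N) @ \oo --> \sum_(x : T) l x.
Proof.
move=> h; apply: (@cvg_big _ _ +%R 0 xpredT _ _ _ _ _ _ _ (fun x _ => h x)).
exact: add_continuous.
Qed.

Definition vN (pi : joint_policy R S Ai) (s : S) : R^nat :=
  series (fun t => gamma ^+ t * ER P r pi t s).
Definition qN (pi : joint_policy R S Ai) (s : S) (a : JA) : R^nat :=
  series (fun t => gamma ^+ t * ERa P r pi t s a).

Lemma ER_ERa pi t s : ER P r pi t s = \sum_a pi s a * ERa P r pi t s a.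
Proof. by case: t. Qed.

Lemma vN_qN pi s N : vN pi s N = \sum_a pi s a * qN pi s a N.
Proof.
rewrite /vN /qN /series /=.
under eq_bigr => t _ do rewrite ER_ERa mulr_sumr.
rewrite exchange_big /=; apply: eq_bigr => a _; rewrite mulr_sumr.
by apply: eq_bigr => t _; rewrite mulrCA.
Qed.

Lemma qN_S pi s a N :
  qN pi s a N.+1 = r s a + gamma * \sum_s' P s a s' * vN pi s' N.
Proof.
rewrite /vN /qN /series /= big_nat_recl //= expr0 mul1r; congr (_ + _).
under eq_bigr => t _ do rewrite exprS /= -mulrA mulr_sumr.
rewrite -mulr_sumr exchange_big /=; congr (_ * _); apply: eq_bigr => s' _.
by rewrite mulr_sumr; apply: eq_bigr => t _; rewrite mulrCA.
Qed.

Definition Mb := \sum_(s : S) \sum_(a : JA) `|r s a|.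

Lemma r_le s a : `|r s a| <= Mb.
Proof.
rewrite /Mb (bigD1 s) //= (bigD1 a) //= -addrA lerDl.
by apply: addr_ge0; apply: sumr_ge0 => *; [apply: normr_ge0 | apply: sumr_ge0 => *].
Qed.

Lemma wavg_le (T : finType) (w f : T -> R) (M : R) :
  (forall x, 0 <= w x) -> \sum_x w x = 1 -> (forall x, `|f x| <= M) ->
  `|\sum_x w x * f x| <= M.
Proof.
move=> h0 h1 hf; apply: le_trans (ler_norm_sum _ _ _) _.
apply: le_trans (_ : \sum_x w x * M <= _); last by rewrite -mulr_suml h1 mul1r.
apply: ler_sum => x _; rewrite normrM ger0_norm //; exact: ler_wpM2l.
Qed.

Lemma ER_bound pi : is_joint_policy pi -> forall t s, `|ER P r pi t s| <= Mb.
Proof.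
move=> hpi; elim => [|t IH] s /=.
  by apply: wavg_le; [exact: (hpi s).1|exact: (hpi s).2|exact: r_le].
apply: wavg_le; [exact: (hpi s).1|exact: (hpi s).2|] => a.
apply: wavg_le; [exact: ((proj1 hmg) s a).1|exact: ((proj1 hmg) s a).2|exact: IH].
Qed.

Lemma ERa_bound pi : is_joint_policy pi -> forall t s a, `|ERa P r pi t s a| <= Mb.
Proof.
move=> hpi [|t] s a /=; first exact: r_le.
apply: wavg_le; [exact: ((proj1 hmg) s a).1|exact: ((proj1 hmg) s a).2|].
exact: ER_bound.
Qed.

Lemma gamma_ge0 : 0 <= gamma. Proof. exact: (proj2 hmg).1. Qed.
Lemma gamma_lt1 : `|gamma| < 1.
Proof. by rewrite ger0_norm ?gamma_ge0 //; exact: (proj2 hmg).2. Qed.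

Lemma series_bound_cvg (u : R^nat) : (forall t, `|u t| <= Mb) ->
  cvgn (series (fun t => gamma ^+ t * u t)).
Proof.
move=> hu; apply: normed_cvg.
apply: (@series_le_cvg _ _ (geometric Mb gamma)).
- by move=> t; apply: normr_ge0.
- move=> t; apply: geometric_ge0 => //; last exact: gamma_ge0.
  exact: le_trans (normr_ge0 _) (hu 0%N).
- move=> t; rewrite /geometric /= normrM normrX ger0_norm ?gamma_ge0 // mulrC.
  by apply: ler_wpM2r; [apply: exprn_ge0; exact: gamma_ge0|exact: hu].
- exact: is_cvg_geometric_series gamma_lt1.
Qed.

Lemma vN_cvg pi s : is_joint_policy pi -> cvgn (vN pi s).
Proof. by move=> h; apply: series_bound_cvg => t; apply: ER_bound. Qed.

Lemma qN_cvg pi s a : is_joint_policy pi -> cvgn (qN pi s a).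
Proof. by move=> h; apply: series_bound_cvg => t; apply: ERa_bound. Qed.

Lemma Q_bellman pi s a : is_joint_policy pi ->
  Q P r gamma pi s a = r s a + gamma * \sum_s' P s a s' * V P r gamma pi s'.
Proof.
move=> hpi; rewrite /Q; apply: cvg_lim => //.
rewrite -cvg_shiftS.
have -> : [sequence series (fun t => gamma ^+ t * ERa P r pi t s a) n0.+1]_n0 =
   (fun N => r s a + gamma * \sum_s' P s a s' * vN pi s' N).
  by apply: funext => N /=; rewrite -qN_S.
apply: cvgD; first exact: cvg_cst.
apply: cvgMl_tmp; apply: cvg_sum_fin => s'.
apply: cvgMl_tmp; exact: (vN_cvg pi s' hpi).
Qed.

Lemma V_avg pi s : is_joint_policy pi ->
  V P r gamma pi s = \sum_a pi s a * Q P r gamma pi s a.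
Proof.
move=> hpi; rewrite /V; apply: cvg_lim => //.
have -> : series (fun t => gamma ^+ t * ER P r pi t s) = (fun N => \sum_a pi s a * qN pi s a N).
  by apply: funext => N; rewrite -vN_qN.
apply: cvg_sum_fin => a; apply: cvgMl_tmp; exact: (qN_cvg pi s a hpi).
Qed.

Lemma opt pi : is_joint_policy pi ->
  (forall s a, Q P r gamma pi s a <= \sum_a' pi s a' * Q P r gamma pi s a') ->
  forall pi', is_joint_policy pi' -> forall s, V P r gamma pi' s <= V P r gamma pi s.
Proof.
move=> hpi hQ pi' hpi' s0.
set W := V P r gamma pi.
have hQW : forall s a, Q P r gamma pi s a <= W s by move=> s a; rewrite /W V_avg.
set C := \sum_s `|W s|.
have hC : forall s, `|W s| <= C.
  by move=> s; rewrite /C (bigD1 s) //= lerDl sumr_ge0 // => *; apply: normr_ge0.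
have hg := gamma_ge0.
have hN : forall N s, vN pi' s N <= W s + gamma ^+ N * C.
  elim=> [|N IH] s.
    rewrite /vN /series /= big_geq // expr0 mul1r.
    have h1 : - W s <= `|W s| by rewrite -normrN ler_norm.
    have h2 := hC s; lra.
  rewrite vN_qN.
  apply: (@le_trans _ _ (\sum_a pi' s a * (W s + gamma ^+ N.+1 * C))); last first.
    by rewrite -mulr_suml (hpi' s).2 mul1r.
  apply: ler_sum => a _; apply: ler_wpM2l; first exact: (hpi' s).1.
  rewrite qN_S; apply: (@le_trans _ _ (Q P r gamma pi s a + gamma ^+ N.+1 * C)); last first.
    by rewrite lerD2r.
  rewrite Q_bellman // -addrA lerD2l exprS -mulrA -mulrDr; apply: ler_wpM2l => //.
  apply: (@le_trans _ _ (\sum_s' P s a s' * (W s' + gamma ^+ N * C))).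
    apply: ler_sum => s' _; apply: ler_wpM2l; [exact: ((proj1 hmg) s a).1|exact: IH].
  under eq_bigr => s' _ do rewrite mulrDr.
  by rewrite big_split /= -mulr_suml ((proj1 hmg) s a).2 mul1r.
rewrite /V; apply: (@le_trans _ _ (limn (fun N => W s0 + gamma ^+ N * C))).
  apply: ler_lim; first exact: (vN_cvg pi' s0 hpi').
    apply/cvg_ex; exists (W s0 + 0 * C); apply: cvgD; first exact: cvg_cst.
    by apply: cvgMr_tmp; apply: cvg_expr; exact: gamma_lt1.
  by apply: nearW => N; apply: hN.
have hl : (fun N => W s0 + gamma ^+ N * C) @ \oo --> W s0 + 0 * C.
  apply: cvgD; first exact: cvg_cst.
  by apply: cvgMr_tmp; apply: cvg_expr; exact: gamma_lt1.
by rewrite (cvg_lim _ hl) // mul0r addr0.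
Qed.

End Val.

Theorem theorem1 (R : realType) (n : nat) (S : finType) (Ai : 'I_n -> finType)
    (P : S -> jact Ai -> S -> R) (r : S -> jact Ai -> R) (gamma : R)
    (Ed Ec : rel 'I_n) (pol : ind_policy R S Ai) :
  is_markov_game P gamma ->
  topo_dag Ed ->
  ind_policies_on Ed pol ->
  locally_optimal P r gamma Ed pol ->
  undirected Ec ->
  is_CG Ec (Q P r gamma (joint_of pol)) ->
  (forall i : 'I_n, Nd Ed i = Nc Ec (iplus i)) ->
  forall s : S, V P r gamma (joint_of pol) s = Vstar P r gamma s.
Proof.
move=> hmg htopo hpol hloc hund [Q1 [Q2 hCG]] hNd s.
case: (pselect (exists c : jact Ai, True)) => [[c _]|hne].
  have hpi : is_joint_policy (joint_of pol) := joint_dist _ _ _ _ _ _ htopo hpol c.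
  have hQ : forall s' a, Q P r gamma (joint_of pol) s' a <=
      \sum_a' joint_of pol s' a' * Q P r gamma (joint_of pol) s' a'.
    by move=> s' a; exact: (E_ge _ _ _ _ _ _ _ _ _ _ htopo hpol hloc hund hNd s' Q1 Q2 (hCG s') a).
  have hopt := opt _ _ _ _ _ _ _ hmg _ hpi hQ.
  rewrite /Vstar; apply/eqP; rewrite eq_le; apply/andP; split.
    apply: ub_le_sup; last by exists (joint_of pol).
    by exists (V P r gamma (joint_of pol) s) => z [pi' hpi' <-]; apply: hopt.
  apply: ge_sup; first by exists (V P r gamma (joint_of pol) s); exists (joint_of pol).
  by move=> z [pi' hpi' <-]; apply: hopt.
have e0 : forall (F : jact Ai -> R), \sum_(a : jact Ai) F a = 0.
  by move=> F; apply: big1 => a _; case: hne; exists a.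
have -> : Vstar P r gamma s = 0.
  rewrite /Vstar -[RHS](sup0 R); congr sup; apply/seteqP; split => // z [pi hpi _].
  by move: (hpi s).2; rewrite e0 => /eqP; rewrite eq_sym oner_eq0.
rewrite /V; have -> : series (fun t => gamma ^+ t * ER P r (joint_of pol) t s) = fun _ => 0.
  apply: funext => N; rewrite /series /=; apply: big1 => t _.
  by case: t => [|t] /=; rewrite e0 mulr0.
exact: lim_cst.
Qed.
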